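(* Let $\mathcal X\subset\mathbb{R}$ be a nonempty compact convex set of control angles and $\epsilon_r>0$. Let $\theta\in\mathbb{R}^n$ contain, as linear coordinates, two matrices $R^a,R^b\in\mathbb{R}^{3\times3}$, and let $R_x(u)=\begin{pmatrix}1&0&0\\0&\cos u&-\sin u\\0&\sin u&\cos u\end{pmatrix}$. Define $$b(\theta,u)=-\frac{\mathrm{tr}\big((R^a)^TR^bR_x(u)^T\big)}{\sqrt{\|R^a\|_F^2+\epsilon_r}\sqrt{\|R^b\|_F^2+\epsilon_r}}.$$ Then for every $u\in\mathcal X$, $b(\cdot,u)$ is twice differentiable in $\theta$ with locally Lipschitz second derivatives and is $L$-curvature bounded for a constant $L$ independent of $u$, and $\|\partial^2b/\partial\theta\partial u\|$ is uniformly bounded over $\theta\in\mathbb{R}^n$, $u\in\mathcal X$.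
   Context: $\|\cdot\|_F$ is the Frobenius norm. A function $\phi$ is $L$-curvature bounded if $\phi(x)+\frac L2\|x\|^2$ is convex and $\nabla\phi$ is $L$-Lipschitz. *)

(* Defs.v *)
From HB Require Import structures.
From mathcomp Require Import all_boot all_order all_algebra.
From mathcomp Require Import all_classical all_reals all_analysis.
Set Implicit Arguments. Unset Strict Implicit. Unset Printing Implicit Defensive.
Import Order.TTheory GRing.Theory Num.Theory.
Import numFieldNormedType.Exports.
Local Open Scope classical_set_scope.
Local Open Scope ring_scope.

Definition Rx (R : realType) (u : R) : 'M[R]_3 :=
  \matrix_(i < 3, j < 3)
    match nat_of_ord i, nat_of_ord j with
    | 0, 0 => 1
    | 1, 1 => cos u
    | 1, 2 => - sin u
    | 2, 1 => sin u
    | 2, 2 => cos u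
    | _, _ => 0
    end.

Definition frob2 (R : realType) (A : 'M[R]_3) : R :=
  \sum_(i < 3) \sum_(j < 3) A i j ^+ 2.

Definition enorm (R : realType) (n : nat) (v : 'rV[R]_n) : R :=
  Num.sqrt (\sum_(i < n) v ord0 i ^+ 2).

Definition coordmx (R : realType) (n : nat) (idx : 'I_3 * 'I_3 -> 'I_n)
  (theta : 'rV[R]_n) : 'M[R]_3 := \matrix_(i, j) theta ord0 (idx (i, j)).

Definition bfun (R : realType) (n : nat) (ia ib : 'I_3 * 'I_3 -> 'I_n)
  (eps : R) (theta : 'rV[R]_n) (u : R) : R :=
  let Ra := coordmx ia theta in
  let Rb := coordmx ib theta in
  - \tr (Ra^T *m Rb *m (Rx u)^T)
    / (Num.sqrt (frob2 Ra + eps) * Num.sqrt (frob2 Rb + eps)).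

Definition evec (R : realType) (n : nat) (i : 'I_n) : 'rV[R]_n := delta_mx ord0 i.

Definition partial (R : realType) (n : nat) (f : 'rV[R]_n -> R) (i : 'I_n)
  (x : 'rV[R]_n) : R := 'D_(evec R i) f x.

Definition grad (R : realType) (n : nat) (f : 'rV[R]_n -> R) (x : 'rV[R]_n)
  : 'rV[R]_n := \row_i partial f i x.

Definition hess (R : realType) (n : nat) (f : 'rV[R]_n -> R) (i j : 'I_n)
  (x : 'rV[R]_n) : R := partial (partial f i) j x.

Definition twice_differentiable (R : realType) (n : nat) (f : 'rV[R]_n -> R) :=
  forall x : 'rV[R]_n, differentiable f x /\
    forall i : 'I_n, differentiable (partial f i) x.

Definition locally_lipschitz (R : realType) (n : nat) (g : 'rV[R]_n -> R) :=
  forall x : 'rV[R]_n, exists r : R, 0 < r /\ exists K : R,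
    forall y z : 'rV[R]_n, enorm (y - x) < r -> enorm (z - x) < r ->
      `|g y - g z| <= K * enorm (y - z).

Definition hess_locally_lipschitz (R : realType) (n : nat) (f : 'rV[R]_n -> R) :=
  forall i j : 'I_n, locally_lipschitz (hess f i j).

Definition convex_fun (R : realType) (n : nat) (g : 'rV[R]_n -> R) :=
  forall (x y : 'rV[R]_n) (t : R), 0 <= t -> t <= 1 ->
    g (t *: x + (1 - t) *: y) <= t * g x + (1 - t) * g y.

Definition curvature_bounded (R : realType) (n : nat) (L : R)
  (phi : 'rV[R]_n -> R) :=
  convex_fun (fun x => phi x + L / 2 * enorm x ^+ 2) /\
  forall x y : 'rV[R]_n, enorm (grad phi x - grad phi y) <= L * enorm (x - y).

Definition convex_setR (R : realType) (X : set R) :=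
  forall x y t, X x -> X y -> 0 <= t -> t <= 1 -> X (t * x + (1 - t) * y).

Definition mixed_fun (R : realType) (n : nat) (b : 'rV[R]_n -> R -> R)
  (i : 'I_n) (theta : 'rV[R]_n) : R -> R :=
  fun u => partial (fun th => b th u) i theta.

(* Main.v *)
Require Import Defs.
From HB Require Import structures.
From mathcomp Require Import all_boot all_order all_algebra.
From mathcomp Require Import all_classical all_reals all_analysis.
From mathcomp Require Import ring lra.
Import Order.TTheory GRing.Theory Num.Theory.
Import numFieldNormedType.Exports.
Local Open Scope classical_set_scope.
Local Open Scope ring_scope.
Set Implicit Arguments. Unset Strict Implicit.
Section G.
Variables (R : realType) (n : nat).
Local Notation V := 'rV[R]_n.

Lemma derive_lineE (U : normedModType R) (f : U -> R) x v :
  'D_v f x = 'D_1 (fun h : R => f (h *: v + x)) 0.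
Proof.
rewrite /derive; set g1 := fun h => h^-1 *: _; set g2 := fun h => h^-1 *: _.
suff -> : g1 = g2 by [].
by rewrite funeqE /g1 /g2 => h /=; rewrite addr0 scale0r add0r [_%:A]mulr1.
Qed.

Lemma isd_line (U : normedModType R) (f : U -> R) x v df :
  is_derive x v f df <-> is_derive (0:R) 1 (fun h : R => f (h *: v + x)) df.
Proof.
split; case=> d e.
  split; [exact: (proj1 (derivable1P f x v) d)|by rewrite -derive_lineE].
split; [exact: (proj2 (derivable1P f x v) d)|by rewrite derive_lineE].
Qed.

Lemma isdM (f g : V -> R) x v df dg : is_derive x v f df -> is_derive x v g dg ->
  is_derive x v (fun y => f y * g y) (f x * dg + g x * df).
Proof. move=> F G; exact: (@is_deriveM R V f g x v df dg F G). Qed.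

Lemma isdD (f g : V -> R) x v df dg : is_derive x v f df -> is_derive x v g dg ->
  is_derive x v (fun y => f y + g y) (df + dg).
Proof. move=> F G; exact: (@is_deriveD R V R f g x v df dg F G). Qed.

Lemma isdC (c : R) x v : is_derive x v (fun _ : V => c) 0.
Proof. exact: (@is_derive_cst R V R c x v). Qed.

Lemma isdS m (F : 'I_m -> V -> R) x v dF : (forall i, is_derive x v (F i) (dF i)) ->
  is_derive x v (fun y => \sum_(i < m) F i y) (\sum_(i < m) dF i).
Proof.
move=> H.
have -> : (fun y => \sum_(i < m) F i y) = \sum_(i < m) F i.
  by apply/funext => y; rewrite fct_sumE.
exact: is_derive_sum.
Qed.

Lemma isdV (f : V -> R) x v df : f x != 0 -> is_derive x v f df ->
  is_derive x v (fun y => (f y)^-1) (- (f x)^-2 * df).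
Proof.
move=> fx0 [d e]; split; first exact: derivableV.
by rewrite deriveV // e.
Qed.

Lemma isd_comp1 (g : R -> R) (f : V -> R) x v dg df :
  is_derive (f x) 1 g dg -> is_derive x v f df ->
  is_derive x v (fun y => g (f y)) (dg * df).
Proof.
move=> G /isd_line F; apply/isd_line.
have G' : is_derive ((fun h : R => f (h *: v + x)) 0) 1 g dg.
  by rewrite scale0r add0r.
exact: (@is_derive1_comp R g (fun h : R => f (h *: v + x)) 0 dg df G' F).
Qed.

Lemma isd_sqrt (f : V -> R) x v df : 0 < f x -> is_derive x v f df ->
  is_derive x v (fun y => Num.sqrt (f y)) ((2 * Num.sqrt (f x))^-1 * df).
Proof. move=> fx F; apply: isd_comp1 => //; exact: is_derive1_sqrt. Qed.

Lemma isd_coord j x v : is_derive x v (fun y : V => y ord0 j) (v ord0 j).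
Proof.
apply/isd_line.
have -> : (fun h : R => (h *: v + x) ord0 j) = (fun h => h * v ord0 j + x ord0 j).
  by apply/funext => h; rewrite !mxE.
have H1 : is_derive (0:R) 1 (fun h : R => h) 1 := is_derive_id _ _.
have H2 : is_derive (0:R) 1 (fun h : R => h * v ord0 j) (0 * 0 + v ord0 j * 1).
  exact: (@is_deriveM R R (fun h => h) (fun _ => v ord0 j) 0 1 1 0 H1 (is_derive_cst _ _ _)).
have H3 := @is_deriveD R R R _ (fun _ => x ord0 j) 0 1 _ 0 H2 (is_derive_cst _ _ _).
have -> : (fun h : R => h * v ord0 j + x ord0 j) = (fun h : R => h * v ord0 j) + (fun _ => x ord0 j).
  by apply/funext => h.
by move: H3; rewrite mul0r add0r mulr1 addr0.
Qed.
Variables (eps : R).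
Hypothesis heps : 0 < eps.
Local Notation IX := ('I_3 * 'I_3 -> 'I_n)%type.

Definition Sf (ix : IX) (x : V) := frob2 (coordmx ix x) + eps.
Definition sq (ix : IX) (x : V) := Num.sqrt (Sf ix x).
Definition iv (ix : IX) (x : V) := (sq ix x)^-1.
Definition gn (ix : IX) k (x : V) := x ord0 (ix k) * iv ix x.

Lemma SfE ix : Sf ix = fun x => \sum_(p < 3) \sum_(q < 3) x ord0 (ix (p, q)) ^+ 2 + eps.
Proof.
apply/funext => x; rewrite /Sf /frob2; congr (_ + _).
by apply: eq_bigr => p _; apply: eq_bigr => q _; rewrite mxE.
Qed.

Lemma ge0_sum2 (F : 'I_3 -> 'I_3 -> R) : (forall p q, 0 <= F p q) ->
  0 <= \sum_(p < 3) \sum_(q < 3) F p q.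
Proof. by move=> H; apply: sumr_ge0 => p _; apply: sumr_ge0 => q _. Qed.

Lemma le_sum2 (F : 'I_3 -> 'I_3 -> R) p q : (forall p q, 0 <= F p q) ->
  F p q <= \sum_(p < 3) \sum_(q < 3) F p q.
Proof.
move=> H; rewrite (bigD1 p) //= (bigD1 q) //=.
rewrite -addrA lerDl addr_ge0 //; first by apply: sumr_ge0.
by apply: sumr_ge0 => p' _; apply: sumr_ge0.
Qed.

Lemma Sf_ge ix (x : V) : eps <= Sf ix x.
Proof. by rewrite SfE lerDr; apply: ge0_sum2 => p q; rewrite sqr_ge0. Qed.

Lemma Sf_gt0 ix (x : V) : 0 < Sf ix x.
Proof. exact: (lt_le_trans heps (Sf_ge ix x)). Qed.

Lemma sq_gt0 ix (x : V) : 0 < sq ix x.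
Proof. by rewrite /sq sqrtr_gt0 Sf_gt0. Qed.

Lemma sq_neq0 ix (x : V) : sq ix x != 0.
Proof. by rewrite gt_eqF // sq_gt0. Qed.

Lemma coord_le_sq ix k (x : V) : `|x ord0 (ix k)| <= sq ix x.
Proof.
case: k => p q; rewrite -sqrtr_sqr /sq ler_sqrt; last exact: ltW (Sf_gt0 ix x).
rewrite SfE; apply: (le_trans (@le_sum2 (fun p q => x ord0 (ix (p, q)) ^+ 2) p q _)).
  by move=> ? ?; rewrite sqr_ge0.
by rewrite lerDl ltW.
Qed.

Lemma iv_ge0 ix (x : V) : 0 <= iv ix x.
Proof. by rewrite /iv invr_ge0 ltW // sq_gt0. Qed.

Lemma iv_le ix (x : V) : iv ix x <= (Num.sqrt eps)^-1.
Proof.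
have h0 := Sf_gt0 ix x.
have hs : Num.sqrt eps <= sq ix x.
  by rewrite /sq ler_sqrt ?Sf_ge //; exact: ltW.
by rewrite /iv lef_pV2 // posrE sqrtr_gt0 // sq_gt0.
Qed.

Lemma gn_le ix k (x : V) : `|gn ix k x| <= 1.
Proof.
rewrite /gn normrM (ger0_norm (iv_ge0 ix x)) /iv ler_pdivrMr ?sq_gt0 //.
by rewrite mul1r coord_le_sq.
Qed.


Lemma isdX2 (f : V -> R) x v df : is_derive x v f df ->
  is_derive x v (fun y => f y ^+ 2) (2 * f x * df).
Proof.
move=> F; have := isdM F F.
have -> : (fun y => f y * f y) = (fun y => f y ^+ 2) by apply/funext => y; rewrite expr2.
by move=> H; apply: is_derive_eq H _; ring.
Qed.

Definition cz ix (v : V) (x : V) :=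
  \sum_(p < 3) \sum_(q < 3) v ord0 (ix (p, q)) * gn ix (p, q) x.

Definition zz ix (v : V) (x : V) :=
  \sum_(p < 3) \sum_(q < 3) x ord0 (ix (p, q)) * v ord0 (ix (p, q)).

Lemma isd_Sf ix (x v : V) : is_derive x v (Sf ix) (2 * zz ix v x).
Proof.
rewrite SfE; apply: is_derive_eq.
  apply: isdD.
  apply: isdS => p; apply: isdS => q; apply: isdX2; exact: isd_coord.
rewrite addr0 /zz mulr_sumr; apply: eq_bigr => p _; rewrite mulr_sumr.
by apply: eq_bigr => q _; ring.
Qed.

Lemma isd_sq ix (x v : V) :
  is_derive x v (sq ix) ((2 * sq ix x)^-1 * (2 * zz ix v x)).
Proof. exact: (isd_sqrt (Sf_gt0 ix x) (isd_Sf ix x v)). Qed.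

Lemma czE ix (v x : V) : cz ix v x = iv ix x * zz ix v x.
Proof.
rewrite /cz /zz mulr_sumr; apply: eq_bigr => p _; rewrite mulr_sumr.
by apply: eq_bigr => q _; rewrite /gn; ring.
Qed.

Lemma isd_iv ix (x v : V) :
  is_derive x v (iv ix) (- (iv ix x * (iv ix x * cz ix v x))).
Proof.
apply: is_derive_eq; first exact: (isdV (sq_neq0 ix x) (isd_sq ix x v)).
rewrite czE /iv; have := sq_neq0 ix x; move: (sq ix x) => s s0.
by field.
Qed.

Lemma isd_gn ix k (x v : V) :
  is_derive x v (gn ix k)
    (v ord0 (ix k) * iv ix x - gn ix k x * (iv ix x * cz ix v x)).
Proof.
apply: is_derive_eq; first exact: (isdM (isd_coord (ix k) x v) (isd_iv ix x v)).
rewrite /gn; ring.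
Qed.


Lemma dfD (f g : V -> R) x : differentiable f x -> differentiable g x ->
  differentiable (fun y => f y + g y) x.
Proof. move=> F G; exact: (differentiableD F G). Qed.

Lemma dfM (f g : V -> R) x : differentiable f x -> differentiable g x ->
  differentiable (fun y => f y * g y) x.
Proof. move=> F G; exact: (differentiableM F G). Qed.

Lemma dfC (c : R) (x : V) : differentiable (fun _ : V => c) x.
Proof. exact: differentiable_cst. Qed.

Lemma dfS m (F : 'I_m -> V -> R) x : (forall i, differentiable (F i) x) ->
  differentiable (fun y => \sum_(i < m) F i y) x.
Proof.
move=> H; have -> : (fun y => \sum_(i < m) F i y) = \sum_(i < m) F i.
  by apply/funext => y; rewrite fct_sumE.
exact: differentiable_sum.
Qed.

Lemma df_coord j (x : V) : differentiable (fun y : V => y ord0 j) x.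
Proof. exact: differentiable_coord. Qed.

Lemma df_Sf ix (x : V) : differentiable (Sf ix) x.
Proof.
rewrite SfE; apply: dfD; last exact: dfC.
apply: dfS => p; apply: dfS => q.
have -> : (fun y : V => y ord0 (ix (p, q)) ^+ 2) =
   (fun y => y ord0 (ix (p, q)) * y ord0 (ix (p, q))).
  by apply/funext => y; rewrite expr2.
by apply: dfM; apply: df_coord.
Qed.

Lemma df_sq ix (x : V) : differentiable (sq ix) x.
Proof.
have -> : sq ix = Num.sqrt \o Sf ix by [].
apply: differentiable_comp; first exact: df_Sf.
apply/derivable1_diffP; have := is_derive1_sqrt (Sf_gt0 ix x); by case.
Qed.

Lemma df_iv ix (x : V) : differentiable (iv ix) x.
Proof. exact: (differentiableV (df_sq ix x) (sq_neq0 ix x)). Qed.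

Lemma df_gn ix k (x : V) : differentiable (gn ix k) x.
Proof. by apply: dfM; [exact: df_coord|exact: df_iv]. Qed.


Inductive B : (V -> R) -> Prop :=
| B_cst c : B (fun _ => c)
| B_iv ix : B (iv ix)
| B_gn ix k : B (gn ix k)
| B_add f g : B f -> B g -> B (fun x => f x + g x)
| B_mul f g : B f -> B g -> B (fun x => f x * g x).

Lemma B_sum m (F : 'I_m -> V -> R) : (forall k, B (F k)) ->
  B (fun x => \sum_(k < m) F k x).
Proof.
elim: m F => [|m IH] F H.
  have -> : (fun x => \sum_(k < 0) F k x) = (fun _ => 0).
    by apply/funext => x; rewrite big_ord0.
  exact: B_cst.
have -> : (fun x => \sum_(k < m.+1) F k x) =
   (fun x => \sum_(k < m) F (widen_ord (leqnSn m) k) x + F ord_max x).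
  by apply/funext => x; rewrite big_ord_recr.
by apply: B_add; [apply: IH => k; exact: H|exact: H].
Qed.

Lemma B_neg f : B f -> B (fun x => - f x).
Proof.
move=> H; have -> : (fun x => - f x) = (fun x => (fun _ => -1) x * f x).
  by apply/funext => x; rewrite mulN1r.
by apply: B_mul => //; exact: B_cst.
Qed.

Lemma B_cz ix v : B (cz ix v).
Proof.
apply: B_sum => p; apply: B_sum => q.
by apply: (@B_mul (fun _ => _)); [exact: B_cst|exact: B_gn].
Qed.

Lemma partial_isd (f : V -> R) i x df : is_derive x (evec R i) f df -> partial f i x = df.
Proof. by move=> H; rewrite /partial derive_val. Qed.

Theorem B_props f : B f ->
  [/\ forall x, differentiable f x, exists C, forall x, `|f x| <= C
    & forall i, B (partial f i)].
Proof.
elim=> {f}.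
- move=> c; split.
  + by move=> x; exact: dfC.
  + by exists `|c|.
  + move=> i; have -> : partial (fun _ : V => c) i = (fun _ => 0).
      by apply/funext => x; apply: partial_isd; exact: isdC.
    exact: B_cst.
- move=> ix; split.
  + exact: df_iv.
  + exists (Num.sqrt eps)^-1 => x; rewrite ger0_norm ?iv_ge0 //; exact: iv_le.
  + move=> i; have -> : partial (iv ix) i =
       (fun x => - (iv ix x * (iv ix x * cz ix (evec R i) x))).
      by apply/funext => x; apply: partial_isd; exact: isd_iv.
    by apply: B_neg; apply: B_mul; [exact: B_iv|apply: B_mul; [exact: B_iv|exact: B_cz]].
- move=> ix k; split.
  + exact: df_gn.
  + by exists 1 => x; exact: gn_le.
  + move=> i; have -> : partial (gn ix k) i =
       (fun x => (fun _ => (evec R i) ord0 (ix k)) x * iv ix x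
                 + - (gn ix k x * (iv ix x * cz ix (evec R i) x))).
      by apply/funext => x; apply: partial_isd; exact: isd_gn.
    apply: B_add; first by apply: B_mul; [exact: B_cst|exact: B_iv].
    by apply: B_neg; apply: B_mul; [exact: B_gn|apply: B_mul; [exact: B_iv|exact: B_cz]].
- move=> f g _ [df [Cf bf] pf] _ [dg [Cg bg] pg]; split.
  + by move=> x; apply: dfD.
  + exists (Cf + Cg) => x; apply: (le_trans (ler_normD _ _)); exact: lerD.
  + move=> i; have -> : partial (fun x => f x + g x) i =
       (fun x => partial f i x + partial g i x).
      apply/funext => x; apply: partial_isd; apply: isdD;
        by apply: derivableP; apply: diff_derivable.
    exact: B_add.
- move=> f g Bf [df [Cf bf] pf] Bg [dg [Cg bg] pg]; split.
  + by move=> x; apply: dfM.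
  + exists (Cf * Cg) => x; rewrite normrM; apply: ler_pM => //.
  + move=> i; have -> : partial (fun x => f x * g x) i =
       (fun x => f x * partial g i x + g x * partial f i x).
      apply/funext => x; apply: partial_isd; apply: isdM;
        by apply: derivableP; apply: diff_derivable.
    by apply: B_add; apply: B_mul.
Qed.


Lemma dpartialE (f : V -> R) (q d : V) : differentiable f q ->
  'D_d f q = \sum_(i < n) d ord0 i * partial f i q.
Proof.
move=> df; rewrite deriveE // {1}(row_sum_delta d) linear_sum.
apply: eq_bigr => i _; rewrite linearZ /= /partial deriveE //.
Qed.

Lemma isd_seg (f : V -> R) (p d : V) (t : R) : (forall x, differentiable f x) ->
  is_derive t (1:R) (fun s : R => f (p + s *: d))
    (\sum_(i < n) d ord0 i * partial f i (p + t *: d)).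
Proof.
move=> df; apply/isd_line; rewrite -dpartialE //.
have -> : (fun h : R => f (p + (h *: 1 + t) *: d)) =
          (fun h : R => f (h *: d + (p + t *: d))).
  apply/funext => h; congr f.
  by rewrite scalerDl -[h *: 1]/(h * 1) mulr1 addrCA.
apply: (proj1 (isd_line f (p + t *: d) d _)).
by apply: derivableP; apply: diff_derivable.
Qed.


Lemma isd_derivable (U : normedModType R) (f : U -> R) x v df :
  is_derive x v f df -> derivable f x v.
Proof. by case. Qed.

Lemma cont01 (k dk : R -> R) a b : (forall s, is_derive s (1:R) k (dk s)) ->
  {within `[a, b], continuous k}.
Proof.
move=> H; apply: derivable_within_continuous => x _.
exact: (isd_derivable (H x)).
Qed.

Lemma le_sum1 (F : 'I_n -> R) i : (forall j, 0 <= F j) -> F i <= \sum_(j < n) F j.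
Proof.
move=> H; rewrite (bigD1 i) //= lerDl; by apply: sumr_ge0.
Qed.

Lemma sum_cst (c : R) : \sum_(i < n) c = n%:R * c.
Proof. by rewrite sumr_const card_ord mulr_natl. Qed.

Lemma enorm_ge0 (v : V) : 0 <= enorm v.
Proof. exact: sqrtr_ge0. Qed.

Lemma enorm_sq (v : V) : enorm v ^+ 2 = \sum_(i < n) v ord0 i ^+ 2.
Proof. by rewrite /enorm sqr_sqrtr //; apply: sumr_ge0 => i _; rewrite sqr_ge0. Qed.

Lemma coord_le_enorm (v : V) i : `|v ord0 i| <= enorm v.
Proof.
rewrite -sqrtr_sqr /enorm ler_sqrt; last by apply: sumr_ge0 => j _; rewrite sqr_ge0.
by apply: (@le_sum1 (fun j => v ord0 j ^+ 2)) => j; rewrite sqr_ge0.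
Qed.

Lemma enorm_le_sum (v : V) : enorm v <= \sum_(i < n) `|v ord0 i|.
Proof.
have S0 : 0 <= \sum_(i < n) `|v ord0 i| by apply: sumr_ge0.
rewrite -(ger0_norm S0) -sqrtr_sqr /enorm ler_sqrt ?sqr_ge0 //.
rewrite expr2 mulr_suml; apply: ler_sum => i _.
rewrite -[v ord0 i ^+ 2]ger0_norm ?sqr_ge0 // normrX expr2; apply: ler_wpM2l => //.
by apply: (@le_sum1 (fun j => `|v ord0 j|)).
Qed.

Lemma enormZ (c : R) (v : V) : enorm (c *: v) = `|c| * enorm v.
Proof.
rewrite /enorm -sqrtr_sqr -sqrtrM ?sqr_ge0 //; congr Num.sqrt.
by rewrite mulr_sumr; apply: eq_bigr => i _; rewrite mxE exprMn.
Qed.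

Lemma lip_partials (f : V -> R) C : (forall x, differentiable f x) -> 0 <= C ->
  (forall i x, `|partial f i x| <= C) ->
  forall y z, `|f y - f z| <= n%:R * C * enorm (y - z).
Proof.
move=> df C0 bd y z; set d := y - z.
have H s : is_derive s (1:R) (fun s : R => f (z + s *: d))
    (\sum_(i < n) d ord0 i * partial f i (z + s *: d)) by exact: isd_seg.
have [c _ E] := MVT_segment ler01 (fun x _ => H x) (cont01 H).
move: E; rewrite scale1r scale0r addr0 subr0 mulr1.
have -> : z + d = y by rewrite /d addrC subrK.
move=> ->.
apply: (le_trans (ler_norm_sum _ _ _)).
rewrite -mulrA -sum_cst; apply: ler_sum => i _.
rewrite normrM mulrC; apply: ler_pM => //; exact: coord_le_enorm.
Qed.

Lemma convex1 (k dk : R -> R) M : 0 <= M ->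
  (forall s, is_derive s (1:R) k (dk s)) ->
  (forall a b, 0 <= a <= 1 -> 0 <= b <= 1 -> dk a - dk b <= M) ->
  forall t, 0 <= t <= 1 -> k t <= t * k 1 + (1 - t) * k 0 + M * (t * (1 - t)).
Proof.
move=> M0 H HM t /andP[t0 t1].
have [c1 Hc1 E1] := MVT_segment t0 (fun x _ => H x) (cont01 H).
have [c2 Hc2 E2] := MVT_segment t1 (fun x _ => H x) (cont01 H).
move: Hc1 Hc2; rewrite !in_itv /= => /andP[c10 c1t] /andP[c2t c21].
have HD := HM c1 c2.
rewrite c10 (le_trans c1t t1) (le_trans t0 c2t) c21 in HD.
have {}HD := HD isT isT.
have P : 0 <= t * (1 - t) * (M - (dk c1 - dk c2)).
  by apply: mulr_ge0; [apply: mulr_ge0; rewrite ?subr_ge0|rewrite subr_ge0].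
have -> : k 1 = k t + dk c2 * (1 - t) by rewrite -E2; ring.
have -> : k 0 = k t - dk c1 * (t - 0) by rewrite -E1; ring.
nra.
Qed.


Definition o0 : 'I_3 := @Ordinal 3 0 isT.
Definition o1 : 'I_3 := @Ordinal 3 1 isT.
Definition o2 : 'I_3 := @Ordinal 3 2 isT.

Lemma sum3 (F : 'I_3 -> R) : \sum_(i < 3) F i = F o0 + F o1 + F o2.
Proof.
rewrite !big_ord_recl big_ord0 addr0 addrA.
by congr (_ + _ + _); congr F; apply: val_inj.
Qed.

Section Dec.
Variables (ia ib : IX).
Definition TT (x : V) := - \sum_(i < 3) gn ia (i, o0) x * gn ib (i, o0) x.
Definition PP (x : V) := - \sum_(i < 3)
   (gn ia (i, o1) x * gn ib (i, o1) x + gn ia (i, o2) x * gn ib (i, o2) x).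
Definition QQ (x : V) := - \sum_(i < 3)
   (gn ia (i, o2) x * gn ib (i, o1) x - gn ia (i, o1) x * gn ib (i, o2) x).

Lemma bfunE (x : V) u : bfun ia ib eps x u = cos u * PP x + sin u * QQ x + TT x.
Proof.
rewrite /bfun /=.
change (- \tr ((coordmx ia x)^T *m coordmx ib x *m (Rx u)^T) / (sq ia x * sq ib x)
   = cos u * PP x + sin u * QQ x + TT x).
rewrite /PP /QQ /TT /gn /iv !sum3 /mxtrace !sum3.
rewrite !mxE !sum3 !mxE !sum3 !mxE /=.
have := sq_neq0 ia x; have := sq_neq0 ib x.
move: (sq ia x) (sq ib x) => sa sb ha hb.
field.
by rewrite ha hb.
Qed.

Lemma B_TT : B (TT).
Proof.
rewrite /TT; apply: B_neg; apply: B_sum => i.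
by apply: B_mul; apply: B_gn.
Qed.

Lemma B_PP : B (PP).
Proof.
rewrite /PP; apply: B_neg; apply: B_sum => i.
by apply: B_add; apply: B_mul; apply: B_gn.
Qed.

Lemma B_QQ : B (QQ).
Proof.
rewrite /QQ; apply: B_neg; apply: B_sum => i.
by apply: B_add; [|apply: B_neg]; apply: B_mul; apply: B_gn.
Qed.

Lemma fuE u : (fun x => bfun ia ib eps x u) =
  (fun x => cos u * PP x + sin u * QQ x + TT x).
Proof. by apply/funext => x; rewrite bfunE. Qed.

End Dec.

Lemma bound_choice (T : Type) (F : 'I_n -> T -> R) :
  (forall i, exists C, forall x, `|F i x| <= C) ->
  exists C, 0 <= C /\ forall i x, `|F i x| <= C.
Proof.
move=> H; have [Cf HC] := choice H.
exists (\sum_(i < n) `|Cf i|); split; first by apply: sumr_ge0.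
move=> i x; apply: (le_trans (HC i x)); apply: (le_trans (ler_norm _)).
by apply: (@le_sum1 (fun i => `|Cf i|)).
Qed.

Lemma B_bound1 f : B f -> exists C, 0 <= C /\ forall i x, `|partial f i x| <= C.
Proof.
move=> Bf; have [_ _ pf] := B_props Bf.
apply: bound_choice => i; have [_ [C HC] _] := B_props (pf i).
by exists C.
Qed.

Lemma B_bound2 f : B f ->
  exists C, 0 <= C /\ forall i j x, `|partial (partial f i) j x| <= C.
Proof.
move=> Bf; have [_ _ pf] := B_props Bf.
have H : forall i, exists C, forall jx : 'I_n * V, `|partial (partial f i) jx.1 jx.2| <= C.
  move=> i; have [C [_ HC]] := B_bound1 (pf i).
  by exists C => -[j x]; exact: HC.
have [C [C0 HC]] := bound_choice H.
by exists C; split => // i j x; exact: (HC i (j, x)).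
Qed.

Lemma partial_lin (a b : R) (f g h : V -> R) i y :
  differentiable f y -> differentiable g y -> differentiable h y ->
  partial (fun x => a * f x + b * g x + h x) i y =
  a * partial f i y + b * partial g i y + partial h i y.
Proof.
move=> df dg dh; apply: partial_isd.
have Df : is_derive y (evec R i) f (partial f i y).
  by apply: derivableP; apply: diff_derivable.
have Dg : is_derive y (evec R i) g (partial g i y).
  by apply: derivableP; apply: diff_derivable.
have Dh : is_derive y (evec R i) h (partial h i y).
  by apply: derivableP; apply: diff_derivable.
have E1 := isdM (isdC a y (evec R i)) Df.
have E2 := isdM (isdC b y (evec R i)) Dg.
have E3 := isdD (isdD E1 E2) Dh.
apply: is_derive_eq E3 _; ring.
Qed.


Lemma convex_pt (x y : V) (t : R) : t *: x + (1 - t) *: y = y + t *: (x - y).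
Proof. by apply/matrixP => i j; rewrite !mxE; ring. Qed.

Lemma enorm_conv (x y : V) (t : R) :
  enorm (y + t *: (x - y)) ^+ 2 =
  t * enorm x ^+ 2 + (1 - t) * enorm y ^+ 2 - t * (1 - t) * enorm (x - y) ^+ 2.
Proof.
rewrite !enorm_sq !mulr_sumr -big_split -sumrB /=; apply: eq_bigr => i _.
by rewrite !mxE; ring.
Qed.

Lemma curv_of_hess (f : V -> R) H : 0 <= H ->
  (forall x, differentiable f x) -> (forall i x, differentiable (partial f i) x) ->
  (forall i j x, `|partial (partial f i) j x| <= H) ->
  curvature_bounded (2 * (n%:R * (n%:R * H))) f.
Proof.
move=> H0 df dpf hb.
set Lc := n%:R * H.
have Lc0 : 0 <= Lc by rewrite mulr_ge0 // ler0n.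
have lipg i y z : `|partial f i y - partial f i z| <= Lc * enorm (y - z).
  exact: lip_partials.
split.
- move=> x y t t0 t1 /=.
  set d := x - y.
  set M := n%:R * (Lc * enorm d * enorm d).
  have M0 : 0 <= M by rewrite !mulr_ge0 ?ler0n ?enorm_ge0.
  have Hs s : is_derive s (1:R) (fun s : R => f (y + s *: d))
     (\sum_(i < n) d ord0 i * partial f i (y + s *: d)) by exact: isd_seg.
  have HM a b : 0 <= a <= 1 -> 0 <= b <= 1 ->
      \sum_(i < n) d ord0 i * partial f i (y + a *: d) -
      \sum_(i < n) d ord0 i * partial f i (y + b *: d) <= M.
    move=> /andP[a0 a1] /andP[b0 b1].
    apply: (le_trans (ler_norm _)); rewrite -sumrB.
    apply: (le_trans (ler_norm_sum _ _ _)).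
    rewrite /M -sum_cst; apply: ler_sum => i _.
    rewrite -mulrBr normrM mulrC; apply: ler_pM => //; last exact: coord_le_enorm.
    apply: (le_trans (lipg _ _ _)); apply: ler_wpM2l => //.
    have -> : y + a *: d - (y + b *: d) = (a - b) *: d.
      by apply/matrixP => i' j'; rewrite !mxE; ring.
    rewrite enormZ; apply: ler_piMl; first exact: enorm_ge0.
    by rewrite ler_norml; apply/andP; split; lra.
  have tt : 0 <= t <= 1 by rewrite t0 t1.
  have := convex1 M0 Hs HM tt.
  rewrite scale1r scale0r addr0.
  have -> : y + d = x by rewrite /d addrC subrK.
  rewrite convex_pt enorm_conv -/d => C.
  have -> : 2 * (n%:R * Lc) / 2 = n%:R * Lc by field.
  rewrite /M in C; nra.
- move=> x y.
  apply: (le_trans (enorm_le_sum _)).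
  apply: (@le_trans _ _ (\sum_(i < n) Lc * enorm (x - y))).
    apply: ler_sum => i _; rewrite !mxE; exact: lipg.
  rewrite sum_cst.
  have e0 := enorm_ge0 (x - y).
  have : 0 <= n%:R * Lc * enorm (x - y) by rewrite !mulr_ge0 ?ler0n.
  nra.
Qed.


Lemma trig_isd (a b c u : R) :
  is_derive u (1:R) (fun u => cos u * a + sin u * b + c) (- sin u * a + cos u * b).
Proof.
have H1 := @is_deriveM R R cos (fun _ => a) u 1 (- sin u) 0 (is_derive_cos u) (is_derive_cst _ _ _).
have H2 := @is_deriveM R R sin (fun _ => b) u 1 (cos u) 0 (is_derive_sin u) (is_derive_cst _ _ _).
have H3 := is_deriveD H1 H2.
have H4 := is_deriveD H3 (is_derive_cst c u 1).
have -> : (fun u => cos u * a + sin u * b + c) =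
  (cos * (fun _ => a) + sin * (fun _ => b)) + (fun _ => c) by apply/funext.
apply: is_derive_eq H4 _; rewrite /GRing.scale /=; ring.
Qed.

Lemma part1 (ia ib : IX) u :
  twice_differentiable (fun th => bfun ia ib eps th u) /\
  hess_locally_lipschitz (fun th => bfun ia ib eps th u).
Proof.
rewrite fuE.
have Bf : B (fun x => cos u * PP ia ib x + sin u * QQ ia ib x + TT ia ib x).
  apply: B_add; last exact: B_TT.
  by apply: B_add; apply: (@B_mul (fun _ => _)); (exact: B_cst || exact: B_PP || exact: B_QQ).
have [d1 _ p1] := B_props Bf.
split.
- move=> x; split; first exact: d1.
  by move=> i; have [d2 _ _] := B_props (p1 i); exact: d2.
- move=> i j; have [_ _ p2] := B_props (p1 i).
  have Bh := p2 j.
  have [d3 _ _] := B_props Bh.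
  have [C [C0 HC]] := B_bound1 Bh.
  move=> x; exists 1; split => //; exists (n%:R * C) => y z _ _.
  exact: lip_partials.
Qed.


Lemma trig_bound1 (a b c u : R) :
  `|cos u * a + sin u * b + c| <= `|a| + `|b| + `|c|.
Proof.
apply: (le_trans (ler_normD _ _)); apply: lerD => //.
apply: (le_trans (ler_normD _ _)); rewrite !normrM.
apply: lerD; rewrite -[X in _ <= X]mul1r; apply: ler_wpM2r => //.
  exact: cos_max.
exact: sin_max.
Qed.

Lemma trig_bound2 (a b u : R) : `|- sin u * a + cos u * b| <= `|a| + `|b|.
Proof.
apply: (le_trans (ler_normD _ _)); rewrite !normrM normrN.
apply: lerD; rewrite -[X in _ <= X]mul1r; apply: ler_wpM2r => //.
  exact: sin_max.
exact: cos_max.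
Qed.

Lemma part2 (ia ib : IX) : exists L, forall u,
  curvature_bounded L (fun th => bfun ia ib eps th u).
Proof.
have [CP [CP0 HP]] := B_bound2 (B_PP ia ib).
have [CQ [CQ0 HQ]] := B_bound2 (B_QQ ia ib).
have [CT [CT0 HT]] := B_bound2 (B_TT ia ib).
have [dP _ pP] := B_props (B_PP ia ib).
have [dQ _ pQ] := B_props (B_QQ ia ib).
have [dT _ pT] := B_props (B_TT ia ib).
exists (2 * (n%:R * (n%:R * (CP + CQ + CT)))) => u.
rewrite fuE.
have Bf : B (fun x => cos u * PP ia ib x + sin u * QQ ia ib x + TT ia ib x).
  apply: B_add; last exact: B_TT.
  by apply: B_add; apply: (@B_mul (fun _ => _)); (exact: B_cst || exact: B_PP || exact: B_QQ).
have [d1 _ p1] := B_props Bf.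
have E i : partial (fun x => cos u * PP ia ib x + sin u * QQ ia ib x + TT ia ib x) i =
   (fun x => cos u * partial (PP ia ib) i x + sin u * partial (QQ ia ib) i x
             + partial (TT ia ib) i x).
  by apply/funext => x; rewrite partial_lin.
apply: curv_of_hess.
- by rewrite !addr_ge0.
- exact: d1.
- by move=> i x; have [d2 _ _] := B_props (p1 i); exact: d2.
- move=> i j x; rewrite E partial_lin.
  + apply: (le_trans (trig_bound1 _ _ _ _)).
    by apply: lerD; [apply: lerD|]; [exact: HP|exact: HQ|exact: HT].
  + by have [d2 _ _] := B_props (pP i); exact: d2.
  + by have [d2 _ _] := B_props (pQ i); exact: d2.
  + by have [d2 _ _] := B_props (pT i); exact: d2.
Qed.

Lemma part3 (ia ib : IX) : exists M : R, forall (theta : V) (u : R),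
     (forall i : 'I_n, derivable (mixed_fun (bfun ia ib eps) i theta) u 1) /\
     enorm (\row_i derive1 (mixed_fun (bfun ia ib eps) i theta) u) <= M.
Proof.
have [CP [CP0 HP]] := B_bound1 (B_PP ia ib).
have [CQ [CQ0 HQ]] := B_bound1 (B_QQ ia ib).
have [dP _ _] := B_props (B_PP ia ib).
have [dQ _ _] := B_props (B_QQ ia ib).
have [dT _ _] := B_props (B_TT ia ib).
exists (n%:R * (CP + CQ)) => th u.
have E i : mixed_fun (bfun ia ib eps) i th =
  (fun u => cos u * partial (PP ia ib) i th + sin u * partial (QQ ia ib) i th
            + partial (TT ia ib) i th).
  by apply/funext => v; rewrite /mixed_fun fuE partial_lin.
split.
- by move=> i; rewrite E; exact: (isd_derivable (trig_isd _ _ _ _)).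
- apply: (le_trans (enorm_le_sum _)); rewrite -sum_cst; apply: ler_sum => i _.
  rewrite mxE E derive1E.
  have [_ ->] := trig_isd (partial (PP ia ib) i th) (partial (QQ ia ib) i th)
                  (partial (TT ia ib) i th) u.
  apply: (le_trans (trig_bound2 _ _ _)); apply: lerD; [exact: HP|exact: HQ].
Qed.

End G.

Unset Implicit Arguments.

Theorem corollary11 (R : realType) (n : nat) (X : set R) (eps : R)
  (ia ib : 'I_3 * 'I_3 -> 'I_n)
  (hXne : X !=set0) (hXc : compact X) (hXcvx : convex_setR X)
  (heps : 0 < eps)
  (hia : injective ia) (hib : injective ib)
  (hab : forall p q, ia p <> ib q) :
  (forall u, X u ->
     twice_differentiable (fun th => bfun ia ib eps th u) /\
     hess_locally_lipschitz (fun th => bfun ia ib eps th u)) /\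
  (exists L : R, forall u, X u ->
     curvature_bounded L (fun th => bfun ia ib eps th u)) /\
  (exists M : R, forall (theta : 'rV[R]_n) (u : R), X u ->
     (forall i : 'I_n, derivable (mixed_fun (bfun ia ib eps) i theta) u 1) /\
     enorm (\row_i derive1 (mixed_fun (bfun ia ib eps) i theta) u) <= M).
Proof.
split; first by move=> u _; exact: (part1 heps).
split.
  have [L HL] := part2 heps ia ib.
  by exists L => u _; exact: HL.
have [M HM] := part3 heps ia ib.
by exists M => th u _; exact: HM.
Qed.
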